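(* For every $n\ge 8$, $k^*(n)>\lfloor (n-8)/3\rfloor$. In other words, for every $n\ge 8$ there is a pair of trees, each with at most $n$ vertices, for which every minimum $\lfloor (n-8)/3\rfloor$-isometric-universal graph is not a tree.
   Context: Graphs are finite, simple and undirected. $\mathrm{dist}_G(u,v)$ denotes the number of edges of a shortest $u$–$v$ path in $G$ ($\infty$ if none exists). For an integer $k\ge 0$, a subgraph $H$ of $G$ is $k$-isometric if, for all vertices $u,v$ of $H$, $\mathrm{dist}_H(u,v)=\mathrm{dist}_G(u,v)$ whenever $\mathrm{dist}_G(u,v)\le k$. A graph $\mathcal U$ is a $k$-isometric-universal graph for a family $\mathcal F$ of graphs if every graph of $\mathcal F$ is isomorphic to a $k$-isometric subgraph of $\mathcal U$; it is minimum if it has the smallest possible number of vertices among all such graphs, and minimal if no proper subgraph of it is $k$-isometric-universal for $\mathcal F$. $k^*(n)$ denotes the smallest value such that for every $k\ge k^*(n)$, every minimum and minimal $k$-isometric-universal graph for a pair of trees each with at most $n$ vertices is a tree. *)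

(* Defs.v *)
From mathcomp Require Import all_boot all_order.
Set Implicit Arguments. Unset Strict Implicit. Unset Printing Implicit Defensive.

Definition is_graph (T : finType) (e : rel T) : Prop :=
  symmetric e /\ irreflexive e.

Definition edges (T : finType) (e : rel T) : {set {set T}} :=
  [set [set x; y] | x in T, y in T & e x y].

Definition is_tree (T : finType) (e : rel T) : Prop :=
  [/\ is_graph e, 0 < #|T|, (forall x y, connect e x y)
    & #|edges e| = #|T| - 1].

Definition walk (T : finType) (e : rel T) (x y : T) (d : nat) : Prop :=
  exists p : seq T, [/\ size p = d, path e x p & last x p = y].

Definition is_dist (T : finType) (e : rel T) (x y : T) (d : nat) : Prop :=
  walk e x y d /\ forall j, walk e x y j -> d <= j.

(* G (vertex type T, adjacency eT) is isomorphic to a k-isometric subgraph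
   of U: via an injective edge-preserving map f, the image subgraph H
   (isomorphic to G through f) satisfies dist_H = dist_U on pairs at
   U-distance <= k. *)
Definition k_isometric_embeds (k : nat) (T : finType) (eT : rel T)
    (U : finType) (eU : rel U) : Prop :=
  exists f : T -> U,
    [/\ injective f,
        (forall x y, eT x y -> eU (f x) (f y))
      & forall x y d, d <= k -> is_dist eU (f x) (f y) d -> is_dist eT x y d].

Definition k_universal (k : nat) (T1 : finType) (e1 : rel T1)
    (T2 : finType) (e2 : rel T2) (U : finType) (eU : rel U) : Prop :=
  is_graph eU /\ k_isometric_embeds k e1 eU /\ k_isometric_embeds k e2 eU.

Definition k_universal_minimum (k : nat) (T1 : finType) (e1 : rel T1)
    (T2 : finType) (e2 : rel T2) (U : finType) (eU : rel U) : Prop :=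
  k_universal k e1 e2 eU /\
  forall (V : finType) (eV : rel V), k_universal k e1 e2 eV -> #|U| <= #|V|.

(* Main.v *)
Require Import Defs.
From mathcomp Require Import all_boot all_order.
From mathcomp Require Import zify.
Set Implicit Arguments. Unset Strict Implicit. Unset Printing Implicit Defensive.


Section Walks.
Variables (T : finType) (e : rel T).

Lemma walk0 x : walk e x x 0.
Proof. by exists [::]. Qed.

Lemma walk1 x y : e x y -> walk e x y 1.
Proof. by move=> H; exists [:: y]; rewrite /= H. Qed.

Lemma walk_cat x y z d1 d2 : walk e x y d1 -> walk e y z d2 -> walk e x z (d1 + d2).
Proof.
move=> [p [Hs Hp Hl]] [q [Hs' Hq Hl']]; exists (p ++ q); split.
- by rewrite size_cat Hs Hs'.
- by rewrite cat_path Hp Hl Hq.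
- by rewrite last_cat Hl.
Qed.

Lemma walk_sym x y d : symmetric e -> walk e x y d -> walk e y x d.
Proof.
move=> Hsym [p [Hs Hp Hl]]; subst d y.
elim: p x Hp => [|z p IH] x /=; first by move=> _; apply: walk0.
move=> /andP [Hxz Hp]; have := IH z Hp => H.
have -> : (size p).+1 = size p + 1 by rewrite addn1.
apply: walk_cat H _; apply: walk1; by rewrite Hsym.
Qed.

Lemma walk_map (T' : finType) (e' : rel T') (h : T -> T') x y d :
  (forall u v, e u v -> e' (h u) (h v)) -> walk e x y d -> walk e' (h x) (h y) d.
Proof.
move=> He [p [Hs Hp Hl]]; exists (map h p); split.
- by rewrite size_map.
- elim: p x Hp {Hs Hl} => [|z p IH] x //= /andP [H1 H2]; by rewrite He // IH.
- by rewrite last_map Hl.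
Qed.
End Walks.

Definition trel (T : finType) (r : T) (p : T -> T) : rel T :=
  fun x y => ((x != r) && (p x == y)) || ((y != r) && (p y == x)).

Lemma trel_tree (T : finType) (r : T) (p : T -> T) (rk : T -> nat) :
  (forall x, x != r -> rk (p x) < rk x) -> is_tree (trel r p).
Proof.
move=> Hrk.
have Hsym : symmetric (trel r p) by move=> x y; rewrite /trel orbC.
have Hnp : forall x, x != r -> p x != x.
  by move=> x Hx; apply/eqP => E; have := Hrk x Hx; rewrite E ltnn.
split.
- split => // x; rewrite /trel orbb; apply/negP => /andP [Hx /eqP E].
  by move: (Hnp x Hx); rewrite E eqxx.
- by apply/card_gt0P; exists r.
- have Hc : forall x, connect (trel r p) x r.
    move=> x; move: {2}(rk x) (leqnn (rk x)) => n; elim: n x => [|n IH] x Hx.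
      case: (eqVneq x r) => [->|Hxr]; first exact: connect0.
      by have := Hrk x Hxr; rewrite ltnNge (leq_trans Hx).
    case: (eqVneq x r) => [->|Hxr]; first exact: connect0.
    apply: (connect_trans (y := p x)).
      by apply: connect1; rewrite /trel Hxr eqxx.
    by apply: IH; have := Hrk x Hxr; move: Hx; lia.
  move=> x y; apply: (connect_trans (Hc x)).
  by rewrite (sym_connect_sym Hsym); apply: Hc.
- have -> : edges (trel r p) = [set [set x; p x] | x in [set~ r]].
    apply/setP => s; apply/imset2P/imsetP.
    + case=> x y _; rewrite inE => /orP [/andP [Hx /eqP <-]|/andP [Hy /eqP <-]] ->.
        by exists x => //; rewrite !inE.
      by exists y; [rewrite !inE | rewrite setUC].
    + case=> x; rewrite !inE => Hx ->; exists x (p x) => //.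
      by rewrite inE /trel Hx eqxx.
  rewrite card_in_imset ?cardsC1 ?subn1 //.
  move=> x y; rewrite !inE => Hx Hy E.
  have : x \in [set y; p y] by rewrite -E set21.
  case/set2P => // Ex.
  have : y \in [set x; p x] by rewrite E set21.
  case/set2P => // Ey.
  have := Hrk x Hx; have := Hrk y Hy; rewrite -Ex -Ey; lia.
Qed.


Section Depth.
Variables (U : finType) (eU : rel U) (HU : is_tree eU) (r : U).

Definition walkb j v := [exists p : j.-tuple U, path eU r p && (last r p == v)].

Lemma walkbI (p : seq U) v : path eU r p -> last r p = v -> walkb (size p) v.
Proof.
move=> Hp Hl; apply/existsP; exists (in_tuple p); by rewrite /= Hp Hl eqxx.
Qed.

Lemma walkbE j v : walkb j v -> exists p : seq U, [/\ size p = j, path eU r p & last r p = v].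
Proof. by case/existsP => p /andP [Hp /eqP Hl]; exists p; rewrite size_tuple. Qed.

Lemma dex v : exists j, walkb j v.
Proof.
case: HU => _ _ Hc _; have := Hc r v; case/connectP => p Hp Hl.
by exists (size p); apply: walkbI.
Qed.

Definition dep v := ex_minn (dex v).

Lemma dep_walk v : walkb (dep v) v.
Proof. by rewrite /dep; case: ex_minnP. Qed.

Lemma dep_min v j : walkb j v -> dep v <= j.
Proof. by rewrite /dep; case: ex_minnP => m _ H; apply: H. Qed.

Lemma dep_r : dep r = 0.
Proof. by apply/eqP; rewrite -leqn0; apply: dep_min; apply: (@walkbI [::]). Qed.

Lemma dep_edge u v : eU u v -> dep v <= (dep u).+1.
Proof.
move=> He; apply: dep_min; have [p [Hs Hp Hl]] := walkbE (dep_walk u).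
rewrite -Hs -(size_rcons p v); apply: walkbI; last by rewrite last_rcons.
by rewrite rcons_path Hp Hl He.
Qed.

Lemma par_ex v : v != r -> exists w, eU w v && ((dep w).+1 == dep v).
Proof.
move=> Hv; have [p [Hs Hp Hl]] := walkbE (dep_walk v).
case/lastP: p Hs Hp Hl => [|q z] Hs Hp Hl; first by rewrite /= in Hl; rewrite Hl eqxx in Hv.
rewrite last_rcons in Hl; subst z; rewrite rcons_path in Hp; case/andP: Hp => Hp He.
exists (last r q); rewrite He /=.
have H1 : dep (last r q) <= size q by apply: dep_min; apply: walkbI.
have H2 := dep_edge He.
rewrite size_rcons in Hs; apply/eqP; lia.
Qed.

Definition par v := odflt r [pick w | eU w v && ((dep w).+1 == dep v)].

Lemma par_spec v : v != r -> eU (par v) v /\ (dep (par v)).+1 = dep v.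
Proof.
move=> Hv; rewrite /par; case: pickP => [w /andP [H1 /eqP H2]|H] //=.
by have [w Hw] := par_ex Hv; rewrite H in Hw.
Qed.

Lemma edgeP u v : eU u v ->
  (par u = v /\ dep u = (dep v).+1) \/ (par v = u /\ dep v = (dep u).+1).
Proof.
move=> He; case: HU => [[Hsym Hirr] _ _ Hcard].
pose PE := [set [set w; par w] | w in [set~ r]].
have HPE : PE \subset edges eU.
  apply/subsetP => s /imsetP [w]; rewrite !inE => Hw ->.
  apply/imset2P; exists w (par w) => //; rewrite inE Hsym; exact: (par_spec Hw).1.
have Hinj : {in [set~ r] &, injective (fun w => [set w; par w])}.
  move=> x y; rewrite !inE => Hx Hy E.
  have : x \in [set y; par y] by rewrite -E set21.
  case/set2P => // Ex.
  have : y \in [set x; par x] by rewrite E set21.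
  case/set2P => // Ey.
  have := (par_spec Hx).2; have := (par_spec Hy).2; rewrite -Ex -Ey; lia.
have Heq : PE = edges eU.
  apply/eqP; rewrite eqEcard HPE /= card_in_imset // cardsC1 Hcard.
  by rewrite subn1.
have : [set u; v] \in PE by rewrite Heq; apply/imset2P; exists u v; rewrite ?inE.
case/imsetP => w; rewrite !inE => Hw E.
have Huv : u != v by apply/eqP => E'; rewrite E' Hirr in He.
have := (par_spec Hw).2 => Hd.
have Hu : u = w \/ u = par w by apply/set2P; rewrite -E set21.
have Hv : v = w \/ v = par w by apply/set2P; rewrite -E set22.
case: Hu => Eu; case: Hv => Ev; subst u v.
all: first [by rewrite eqxx in Huv | by left; split; rewrite ?Hd | by right; split; rewrite ?Hd].
Qed.

End Depth.


Definition adjW (a u v : nat) : bool :=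
  ((minn u v).+1 == maxn u v) || ((minn u v == a) && (maxn u v == 4 * a - 1)).

Definition eW (a : nat) : rel 'I_(4 * a) := fun u v => adjW a u v.
Arguments eW : clear implicits.

Definition dl (a u v : nat) : nat :=
  minn (u - v + (v - u))
    (minn (u - a + (a - u) + 1 + (v - (4*a-1) + ((4*a-1) - v)))
          (u - (4*a-1) + ((4*a-1) - u) + 1 + (v - a + (a - v)))).

Lemma eW_graph a : 0 < a -> is_graph (eW a).
Proof.
move=> Ha; split.
- by move=> u v; rewrite /eW /adjW minnC maxnC.
- move=> u; rewrite /eW /adjW minnn maxnn; apply/negP => /orP [/eqP|/andP [/eqP H1 /eqP H2]]; lia.
Qed.

Lemma min3 A B C X : X <= A.+1 -> X <= B.+1 -> X <= C.+1 -> X <= (minn A (minn B C)).+1.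
Proof. lia. Qed.
Lemma adjW_cases a v w : adjW a v w -> [\/ w = v.+1, v = w.+1, v = a /\ w = 4*a-1 | v = 4*a-1 /\ w = a].
Proof. rewrite /adjW => /orP [/eqP E|/andP [/eqP H1 /eqP H2]].
- case: (leqP v w) => H. rewrite (minn_idPl H) (maxn_idPr H) in E; by constructor 1.
  rewrite (minn_idPr (ltnW H)) (maxn_idPl (ltnW H)) in E; by constructor 2.
- case: (leqP v w) => H. rewrite (minn_idPl H) (maxn_idPr H) in H1 H2; by constructor 3.
  rewrite (minn_idPr (ltnW H)) (maxn_idPl (ltnW H)) in H1 H2; by constructor 4.
Qed.
Ltac pick := first [ apply: leq_trans (geq_minl _ _) _; lia | apply: leq_trans (geq_minr _ _) _; apply: leq_trans (geq_minl _ _) _; lia | apply: leq_trans (geq_minr _ _) _; apply: leq_trans (geq_minr _ _) _; lia ].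
Lemma dl_lip a u v w : adjW a v w -> dl a u w <= (dl a u v).+1.
Proof.
case/adjW_cases => [->|->|[-> ->]|[-> ->]]; rewrite {2}/dl; apply: min3; rewrite /dl; pick.
Qed.

Lemma dl_path a u (x : 'I_(4 * a)) p :
  path (eW a) x p -> dl a u (last x p) <= dl a u x + size p.
Proof.
elim: p x => [|z p IH] x /=; first by rewrite addn0.
move=> /andP [H1 H2]; have := IH z H2; have := dl_lip u H1; lia.
Qed.

Lemma dl_walk a (x y : 'I_(4 * a)) d : walk (eW a) x y d -> dl a x y <= d.
Proof.
case=> p [Hs Hp Hl]; have := dl_path x Hp; rewrite Hl Hs.
have -> : dl a x x = 0 by rewrite /dl; lia.
done.
Qed.

Lemma embed_ok a k (T : finType) (e : rel T) (h : T -> 'I_(4 * a)) :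
  injective h -> (forall x y, e x y -> eW a (h x) (h y)) ->
  (forall x y, dl a (h x) (h y) <= k ->
     exists2 j, j <= dl a (h x) (h y) & walk e x y j) ->
  k_isometric_embeds k e (eW a).
Proof.
move=> Hinj He Hw; exists h; split => // x y d Hdk [Hwd Hmin].
have H1 := dl_walk Hwd.
have [j Hj Hwj] := Hw x y (leq_trans H1 Hdk).
have H2 := Hmin j (walk_map He Hwj).
have Ejd : j = d by lia.
subst j; split => // j' Hj'; exact: Hmin j' (walk_map He Hj').
Qed.


Section Trees.
Variable a : nat.
Hypothesis Ha : 0 < a.
Notation m := (3 * a).+1.
Notation X i := (inord i : 'I_m).

Lemma XK i : i <= 3 * a -> nat_of_ord (X i) = i.
Proof. by move=> H; rewrite inordK. Qed.

Lemma min3_lb A B C T k : 0 < k -> (T <= A \/ k <= A) -> (T <= B \/ k <= B) -> (T <= C \/ k <= C) ->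
  minn A (minn B C) <= k.-1 -> T <= minn A (minn B C).
Proof. rewrite -subn1; lia. Qed.

Lemma dl_lb u v T :
  (T <= u - v + (v - u) \/ a <= u - v + (v - u)) ->
  (T <= u - a + (a - u) + 1 + (v - (4*a-1) + ((4*a-1) - v)) \/ a <= u - a + (a - u) + 1 + (v - (4*a-1) + ((4*a-1) - v))) ->
  (T <= u - (4*a-1) + ((4*a-1) - u) + 1 + (v - a + (a - v)) \/ a <= u - (4*a-1) + ((4*a-1) - u) + 1 + (v - a + (a - v))) ->
  dl a u v <= a.-1 -> T <= dl a u v.
Proof. exact: min3_lb Ha. Qed.

Definition par1 (i : 'I_m) : 'I_m := inord i.-1.
Definition e1 := trel ord0 par1.

Lemma par1E (i : 'I_m) : nat_of_ord (par1 i) = i.-1.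
Proof. rewrite /par1 inordK //; have := ltn_ord i; lia. Qed.

Lemma e1_tree : is_tree e1.
Proof.
apply: (trel_tree (rk := fun i : 'I_m => nat_of_ord i)) => i Hi /=; rewrite par1E.
have : nat_of_ord i != 0 by apply: contra Hi => /eqP H; apply/eqP/val_inj.
lia.
Qed.

Lemma h1_lt (i : 'I_m) : i < 4 * a.
Proof. have := ltn_ord i; lia. Qed.

Definition h1 (i : 'I_m) : 'I_(4 * a) := Ordinal (h1_lt i).

Lemma h1E (i : 'I_m) : nat_of_ord (h1 i) = i.
Proof. by []. Qed.

Lemma h1_inj : injective h1.
Proof. by move=> x y /(congr1 (@nat_of_ord _)) /= E; apply: val_inj. Qed.

Lemma e1_edge x y : e1 x y -> eW a (h1 x) (h1 y).
Proof.
have Hv : forall i : 'I_m, i != ord0 -> nat_of_ord i != 0.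
  by move=> i Hi; apply: contra Hi => /eqP H; apply/eqP/val_inj.
rewrite /e1 /trel /eW /adjW !h1E => /orP [/andP [/Hv Hx /eqP <-]|/andP [/Hv Hy /eqP <-]];
  rewrite par1E; apply/orP; left; apply/eqP; lia.
Qed.

Lemma e1_walk_up s t : s <= t -> t <= 3 * a -> walk e1 (X t) (X s) (t - s).
Proof.
move=> Hst; elim: t Hst => [|t IH] Hst Ht.
  have -> : s = 0 by lia.
  by rewrite subnn; apply: walk0.
case: (eqVneq s t.+1) => [->|Hne]; first by rewrite subnn; apply: walk0.
have -> : t.+1 - s = 1 + (t - s) by lia.
apply: walk_cat (IH _ _); [apply: walk1| lia | lia].
rewrite /e1 /trel; apply/orP; left; apply/andP; split.
  apply/eqP => /(congr1 (@nat_of_ord _)); rewrite XK //=; lia.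
apply/eqP/val_inj => /=; rewrite par1E !XK //; lia.
Qed.

Lemma e1_sym : symmetric e1.
Proof. by move=> x y; rewrite /e1 /trel orbC. Qed.

Lemma e1_isom : k_isometric_embeds a.-1 e1 (eW a).
Proof.
apply: embed_ok h1_inj e1_edge _ => x y; rewrite !h1E => Hd.
have Hx := ltn_ord x; have Hy := ltn_ord y.
exists (x - y + (y - x)); first by move: Hd; apply: dl_lb; lia.
case: (leqP y x) => Hxy.
  have := @e1_walk_up y x Hxy (ltac:(lia)); rewrite !inord_val.
  by have -> : x - y + (y - x) = x - y by lia.
apply: walk_sym e1_sym _.
have := @e1_walk_up x y (ltnW Hxy) (ltac:(lia)); rewrite !inord_val.
by have -> : x - y + (y - x) = y - x by lia.
Qed.

Definition st (i : nat) : bool := (i == 1) || (i == a.+1) || (i == (2 * a).+1).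
Definition par2 (i : 'I_m) : 'I_m := if st i then ord0 else inord i.-1.
Definition e2 := trel ord0 par2.

Lemma par2E (i : 'I_m) : nat_of_ord (par2 i) = if st i then 0 else i.-1.
Proof. rewrite /par2; case: ifP => //= _; rewrite inordK //; have := ltn_ord i; lia. Qed.

Lemma nz (i : 'I_m) : i != ord0 -> 0 < nat_of_ord i.
Proof. by move=> Hi; rewrite lt0n; apply: contra Hi => /eqP H; apply/eqP/val_inj. Qed.

Lemma e2_tree : is_tree e2.
Proof.
apply: (trel_tree (rk := fun i : 'I_m => nat_of_ord i)) => i Hi /=; rewrite par2E.
have := nz Hi; case: ifP => _; lia.
Qed.

Definition lab2 (i : nat) : nat := if i <= a then a - i else if i <= 2 * a then i else 6 * a - i.

Lemma lab2_spec i : (i <= a /\ lab2 i = a - i) \/ (a < i <= 2 * a /\ lab2 i = i) \/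
   (2 * a < i /\ lab2 i = 6 * a - i).
Proof. rewrite /lab2; case: (leqP i a) => H1; first by left. case: (leqP i (2 * a)) => H2; lia. Qed.

Lemma lab2_0 i : i <= a -> lab2 i = a - i.
Proof. by rewrite /lab2 => ->. Qed.
Lemma lab2_1 i : a < i <= 2 * a -> lab2 i = i.
Proof. by rewrite /lab2 => /andP [H1 H2]; rewrite leqNgt H1 /= H2. Qed.
Lemma lab2_2 i : 2 * a < i -> lab2 i = 6 * a - i.
Proof. rewrite /lab2 => H; rewrite ifN; last lia. by rewrite ifN; last lia. Qed.

Lemma h2_lt (i : 'I_m) : lab2 i < 4 * a.
Proof. have := ltn_ord i; have := lab2_spec i; lia. Qed.

Definition h2 (i : 'I_m) : 'I_(4 * a) := Ordinal (h2_lt i).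

Lemma h2_inj : injective h2.
Proof.
move=> x y /(congr1 (@nat_of_ord _)) /= E; apply: val_inj => /=.
have := ltn_ord x; have := ltn_ord y; have := lab2_spec x; have := lab2_spec y; lia.
Qed.

Lemma adjW_intro v w : (w = v.+1 \/ v = w.+1 \/ (v = a /\ w = 4 * a - 1) \/ (v = 4 * a - 1 /\ w = a)) ->
  adjW a v w.
Proof.
case=> [->|[->|[[-> ->]|[-> ->]]]]; rewrite /adjW.
- by rewrite (minn_idPl (leqnSn v)) (maxn_idPr (leqnSn v)) eqxx.
- by rewrite (minn_idPr (leqnSn w)) (maxn_idPl (leqnSn w)) eqxx.
- have H : a <= 4 * a - 1 by lia.
  by rewrite (minn_idPl H) (maxn_idPr H) !eqxx orbT.
- have H : a <= 4 * a - 1 by lia.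
  by rewrite (minn_idPr H) (maxn_idPl H) !eqxx orbT.
Qed.

Lemma stP i : reflect (i = 1 \/ i = a.+1 \/ i = (2 * a).+1) (st i).
Proof.
rewrite /st; apply: (iffP idP).
- by case/orP => [/orP [/eqP->|/eqP->]|/eqP->]; auto.
- by case=> [->|[->|->]]; rewrite eqxx ?orbT.
Qed.

Lemma e2_par (i : 'I_m) : i != ord0 -> adjW a (lab2 i) (lab2 (par2 i)).
Proof.
move=> Hi; have H0 := nz Hi; have Hm := ltn_ord i; rewrite par2E.
have L0 : lab2 0 = a by rewrite lab2_0 // subn0.
case: (stP i) => Hs.
  rewrite L0; case: Hs => [E|[E|E]]; rewrite E.
  - rewrite lab2_0 //; apply: adjW_intro; left; lia.
  - rewrite lab2_1; last lia. by apply: adjW_intro; right; left.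
  - rewrite lab2_2; last lia. apply: adjW_intro; right; right; right; split => //; lia.
case: (leqP i a) => H1.
  rewrite !lab2_0 //; last lia. apply: adjW_intro; left; lia.
case: (leqP i (2 * a)) => H2.
  rewrite !lab2_1; try lia. apply: adjW_intro; right; left; lia.
rewrite !lab2_2; try lia. apply: adjW_intro; left; lia.
Qed.

Lemma e2_edge x y : e2 x y -> eW a (h2 x) (h2 y).
Proof.
rewrite /e2 /trel /eW /= => /orP [/andP [Hx /eqP <-]|/andP [Hy /eqP <-]].
  exact: e2_par.
have := e2_par Hy; rewrite /adjW minnC maxnC //.
Qed.

Lemma e2_sym : symmetric e2.
Proof. by move=> x y; rewrite /e2 /trel orbC. Qed.

Lemma e2_step t : 0 < t <= 3 * a -> ~~ st t -> e2 (X t) (X t.-1).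
Proof.
move=> Ht Hs; rewrite /e2 /trel; apply/orP; left; apply/andP; split.
  apply/eqP => /(congr1 (@nat_of_ord _)); rewrite XK //=; lia.
apply/eqP/val_inj => /=; rewrite par2E XK; last lia.
rewrite (negbTE Hs) XK //; lia.
Qed.

Lemma e2_up lo s t : (lo = 0 \/ lo = a \/ lo = 2 * a) -> lo < s -> s <= t -> t <= lo + a ->
  walk e2 (X t) (X s) (t - s).
Proof.
move=> Hlo Hs Hst; elim: t Hst => [|t IH] Hst Ht.
  lia.
case: (eqVneq s t.+1) => [->|Hne]; first by rewrite subnn; apply: walk0.
have -> : t.+1 - s = 1 + (t - s) by lia.
apply: walk_cat (IH _ _); [|lia|lia].
apply: walk1; apply: e2_step; first lia.
apply/stP; lia.
Qed.

Lemma e2_start lo : (lo = 0 \/ lo = a \/ lo = 2 * a) -> walk e2 (X lo.+1) (X 0) 1.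
Proof.
move=> Hlo; apply: walk1; rewrite /e2 /trel; apply/orP; left; apply/andP; split.
  apply/eqP => /(congr1 (@nat_of_ord _)); rewrite XK //=; lia.
apply/eqP/val_inj => /=; rewrite par2E XK; last lia.
have -> : st lo.+1 by apply/stP; lia.
by rewrite XK.
Qed.

Lemma e2_center lo i : (lo = 0 \/ lo = a \/ lo = 2 * a) -> lo < i <= lo + a ->
  walk e2 (X i) (X 0) (i - lo).
Proof.
move=> Hlo Hi; have -> : i - lo = (i - lo.+1) + 1 by lia.
apply: walk_cat (e2_start Hlo); apply: (e2_up Hlo); lia.
Qed.

Ltac labx i := first [ rewrite (@lab2_0 i); [|lia] | rewrite (@lab2_1 i); [|lia] | rewrite (@lab2_2 i); [|lia] ].

Ltac fin x y := repeat match goal with H : ?l = 0 \/ ?l = a \/ ?l = 2 * a |- _ => case: H => [E|[E|E]]; subst l end;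
  labx x; labx y; apply: dl_lb; lia.

Lemma e2_isom : k_isometric_embeds a.-1 e2 (eW a).
Proof.
apply: embed_ok h2_inj e2_edge _ => x y /= Hd.
have Hx := ltn_ord x; have Hy := ltn_ord y.
have Hwx := inord_val x; have Hwy := inord_val y.
have same : forall lo, (lo = 0 \/ lo = a \/ lo = 2 * a) -> lo < x <= lo + a -> lo < y <= lo + a ->
    x - y + (y - x) <= dl a (lab2 x) (lab2 y) -> exists2 j, j <= dl a (lab2 x) (lab2 y) & walk e2 x y j.
  move=> lo Hlo H1 H2 Hle; exists (x - y + (y - x)) => //.
  case: (leqP y x) => Hxy.
    have := @e2_up lo y x Hlo (ltac:(lia)) Hxy (ltac:(lia)); rewrite Hwx Hwy.
    by have -> : x - y + (y - x) = x - y by lia.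
  apply: walk_sym e2_sym _.
  have := @e2_up lo x y Hlo (ltac:(lia)) (ltnW Hxy) (ltac:(lia)); rewrite Hwx Hwy.
  by have -> : x - y + (y - x) = y - x by lia.
have toc : forall i : 'I_m, exists2 di, (i = 0 :> nat /\ di = 0) \/
      (exists lo, [/\ (lo = 0 \/ lo = a \/ lo = 2 * a), lo < i <= lo + a & di = i - lo]) &
    walk e2 i (X 0) di.
  move=> i; have Hi := ltn_ord i; have Hwi := inord_val i.
  case: (posnP i) => Hi0.
    exists 0; first by left.
    have -> : i = X 0 by apply: val_inj; rewrite /= XK.
    exact: walk0.
  case: (leqP i a) => H1.
    exists (i - 0); first by right; exists 0; split => //; [left|lia].
    by rewrite -{1}Hwi; apply: e2_center; [left|lia].
  case: (leqP i (2 * a)) => H2.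
    exists (i - a); first by right; exists a; split => //; [right;left|lia].
    by rewrite -{1}Hwi; apply: e2_center; [right;left|lia].
  exists (i - 2 * a); first by right; exists (2 * a); split => //; [right;right|lia].
  by rewrite -{1}Hwi; apply: e2_center; [right;right|lia].
have viac : forall dx dy, walk e2 x (X 0) dx -> walk e2 y (X 0) dy ->
    dx + dy <= dl a (lab2 x) (lab2 y) -> exists2 j, j <= dl a (lab2 x) (lab2 y) & walk e2 x y j.
  move=> dx dy Wx Wy Hle; exists (dx + dy) => //.
  apply: walk_cat Wx _; exact: walk_sym e2_sym Wy.
have [dx Dx Wx] := toc x; have [dy Dy Wy] := toc y.
move: Hd.
case: Dx => [[Ex Edx]|[lox [Hlox Hx' Edx]]]; case: Dy => [[Ey Edy]|[loy [Hloy Hy' Edy]]].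
- move=> Hd; apply: (viac dx dy Wx Wy); move: Hd; fin x y.
- move=> Hd; apply: (viac dx dy Wx Wy); move: Hd; fin x y.
- move=> Hd; apply: (viac dx dy Wx Wy); move: Hd; fin x y.
- case: (eqVneq lox loy) => [Elo|Nlo] Hd.
    subst loy; apply: (same lox Hlox Hx' Hy'); move: Hd; fin x y.
  apply: (viac dx dy Wx Wy); move: Hd; fin x y.
Qed.

End Trees.


Lemma argmax_nat (D : nat -> nat) lo hi : lo < hi ->
  exists2 t, lo <= t < hi & forall s, lo <= s < hi -> D s <= D t.
Proof.
elim: hi => [|hi IH] // Hlh.
case: (eqVneq lo hi) => [<-|Hne].
  by exists lo => [|s Hs]; [lia | have -> : s = lo by lia].
have [t Ht Hm] := IH (ltac:(lia)).
case: (leqP (D hi) (D t)) => H.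
  exists t => [|s Hs]; first lia.
  by case: (eqVneq s hi) => [->//|Hs']; apply: Hm; lia.
exists hi => [|s Hs]; first lia.
case: (eqVneq s hi) => [->//|Hs']; have := Hm s (ltac:(lia)); lia.
Qed.

Section Big.
Variables (a : nat) (Ha : 0 < a) (U : finType) (eU : rel U) (HU : is_tree eU).
Variables (f g : 'I_(3 * a).+1 -> U).
Hypotheses (finj : injective f) (ginj : injective g).
Hypotheses (fe : forall x y, e1 x y -> eU (f x) (f y)) (ge : forall x y, e2 x y -> eU (g x) (g y)).

Notation X i := (inord i : 'I_(3 * a).+1).
Let r := g ord0.
Let d := dep HU r.
Let p := par HU r.
Let F i := f (X i).
Let G i := g (X i).

Lemma Xinj i j : i <= 3 * a -> j <= 3 * a -> X i = X j -> i = j.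
Proof. by move=> Hi Hj /(congr1 (@nat_of_ord _)); rewrite !XK. Qed.

Lemma Finj i j : F i = F j -> i <= 3 * a -> j <= 3 * a -> i = j.
Proof. by move=> /finj E Hi Hj; apply: Xinj. Qed.

Lemma Ginj i j : G i = G j -> i <= 3 * a -> j <= 3 * a -> i = j.
Proof. by move=> /ginj E Hi Hj; apply: Xinj. Qed.

Lemma Fedge t : t < 3 * a -> eU (F t.+1) (F t).
Proof.
move=> Ht; apply: fe; rewrite /e1 /trel; apply/orP; left; apply/andP; split.
  apply/eqP => /(congr1 (@nat_of_ord _)); rewrite XK //=; lia.
apply/eqP/val_inj => /=; rewrite par1E // !XK //; lia.
Qed.

Lemma Gr : G 0 = r.
Proof. by rewrite /G /r; congr g; apply: val_inj => /=; rewrite inordK. Qed.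

Lemma Gdep lo t : (lo = 0 \/ lo = a \/ lo = 2 * a) -> 0 < t <= a ->
  d (G (lo + t)) = t /\ p (G (lo + t)) = G (if t == 1 then 0 else (lo + t).-1).
Proof.
move=> Hlo; elim: t => [|t IH] // Ht.
case: (posnP t) => Ht0.
  subst t; have He : eU (G (lo + 1)) r.
    rewrite -Gr; apply: ge; have := @e2_step a Ha (lo + 1) (ltac:(lia)).
    have -> : st a (lo + 1) by apply/stP; lia.
    move=> _; rewrite /e2 /trel; apply/orP; left; apply/andP; split.
      apply/eqP => /(congr1 (@nat_of_ord _)); rewrite XK //=; lia.
    apply/eqP/val_inj => /=; rewrite (par2E Ha) XK; last lia.
    have -> : st a (lo + 1) by apply/stP; lia.
    by rewrite XK.
  case: (edgeP HU r He) => [[Hp Hd]|[Hp Hd]].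
    by rewrite -/d -/p in Hp Hd; rewrite Hd /d dep_r Hp -Gr.
  by rewrite -/d in Hd; move: Hd; rewrite /d dep_r.
have [IH1 IH2] := IH (ltac:(lia)).
have He : eU (G (lo + t.+1)) (G (lo + t)).
  have := @e2_step a Ha (lo + t.+1) (ltac:(lia)).
  have Hs : ~~ st a (lo + t.+1) by apply/stP; lia.
  by move=> /(_ Hs) /ge; rewrite /G addnS.
case: (edgeP HU r He) => [[Hp Hd]|[Hp Hd]]; rewrite -/d -/p in Hp Hd.
  by rewrite Hd IH1 Hp addnS /=; have -> : (t.+1 == 1) = false by apply/eqP; lia.
exfalso; rewrite IH2 in Hp; move: Hp; case: ifP => _ Hp.
  have := Ginj Hp (ltac:(lia)) (ltac:(lia)); lia.
have := Ginj Hp (ltac:(lia)) (ltac:(lia)); lia.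
Qed.

Lemma no3o i1 i2 i3 : i1 < i2 -> i2 < i3 -> i3 <= 3 * a ->
  d (F i1) = d (F i2) -> d (F i2) = d (F i3) -> False.
Proof.
move=> H12 H23 H3 E12 E23.
have [t Ht Hm] := argmax_nat (fun s => d (F s)) (ltac:(lia) : i1.+1 < i3).
have Hmax : forall s, i1 <= s <= i3 -> d (F s) <= d (F t).
  move=> s Hs; case: (eqVneq s i1) => [->|Hs1].
    by rewrite E12; apply: Hm; lia.
  case: (eqVneq s i3) => [->|Hs3].
    by rewrite -E23; apply: Hm; lia.
  apply: Hm; lia.
have Hl : p (F t) = F t.-1.
  have He : eU (F t) (F t.-1) by have := @Fedge t.-1 (ltac:(lia)); rewrite prednK //; lia.
  case: (edgeP HU r He) => [[Hp Hd]|[Hp Hd]]; rewrite -/d -/p in Hp Hd => //.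
  have := Hmax t.-1 (ltac:(lia)); lia.
have Hr : p (F t) = F t.+1.
  have He : eU (F t) (F t.+1) by case: HU => [[Hsym _] _ _ _]; rewrite Hsym; apply: Fedge; lia.
  case: (edgeP HU r He) => [[Hp Hd]|[Hp Hd]]; rewrite -/d -/p in Hp Hd => //.
  have := Hmax t.+1 (ltac:(lia)); lia.
rewrite Hl in Hr; have := Finj Hr (ltac:(lia)) (ltac:(lia)); lia.
Qed.

Lemma no3 i j k : i != j -> j != k -> i != k -> i <= 3 * a -> j <= 3 * a -> k <= 3 * a ->
  d (F i) = d (F j) -> d (F j) = d (F k) -> False.
Proof.
move=> Hij Hjk Hik Hi Hj Hk E1 E2.
case: (ltngtP i j) => [Lij|Lij|Eij]; last by rewrite Eij eqxx in Hij.
- case: (ltngtP j k) => [Ljk|Ljk|E]; last by rewrite E eqxx in Hjk.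
  + exact: (@no3o i j k).
  + case: (ltngtP i k) => [Lik|Lik|E]; last by rewrite E eqxx in Hik.
    * by apply: (@no3o i k j) => //; rewrite -?E1 -?E2.
    * by apply: (@no3o k i j) => //; rewrite -?E1 -?E2.
- case: (ltngtP j k) => [Ljk|Ljk|E]; last by rewrite E eqxx in Hjk.
  + case: (ltngtP i k) => [Lik|Lik|E]; last by rewrite E eqxx in Hik.
    * by apply: (@no3o j i k) => //; rewrite -?E1 -?E2.
    * by apply: (@no3o j k i) => //; rewrite -?E1 -?E2.
  + by apply: (@no3o k j i) => //; rewrite -?E1 -?E2.
Qed.

Lemma big : 4 * a < #|U|.
Proof.
pose P := [set f x | x in 'I_(3 * a).+1].
have HP : forall v, v \in P -> exists2 i, i <= 3 * a & v = F i.
  move=> v /imsetP [x _ ->]; exists x; first by have := ltn_ord x.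
  by rewrite /F inord_val.
have Hoff : forall t : 'I_a, exists v, (v \notin P) && (d v == t.+1).
  move=> t; have Ht := ltn_ord t.
  have [D1 _] := @Gdep 0 t.+1 (ltac:(lia)) (ltac:(lia)).
  have [D2 _] := @Gdep a t.+1 (ltac:(lia)) (ltac:(lia)).
  have [D3 _] := @Gdep (2 * a) t.+1 (ltac:(lia)) (ltac:(lia)).
  case: (boolP (G (0 + t.+1) \in P)) => [H1|H1]; last by exists (G (0 + t.+1)); rewrite H1 D1 eqxx.
  case: (boolP (G (a + t.+1) \in P)) => [H2|H2]; last by exists (G (a + t.+1)); rewrite H2 D2 eqxx.
  case: (boolP (G (2 * a + t.+1) \in P)) => [H3|H3]; last by exists (G (2 * a + t.+1)); rewrite H3 D3 eqxx.
  exfalso.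
  have [i1 Hi1 E1] := HP _ H1; have [i2 Hi2 E2] := HP _ H2; have [i3 Hi3 E3] := HP _ H3.
  apply: (@no3 i1 i2 i3) => //; try (by rewrite -E1 -E2 D1 D2); try (by rewrite -E2 -E3 D2 D3).
  - apply/eqP => E; subst i2; rewrite -E1 in E2; have := Ginj E2 (ltac:(lia)) (ltac:(lia)); lia.
  - apply/eqP => E; subst i3; rewrite -E2 in E3; have := Ginj E3 (ltac:(lia)) (ltac:(lia)); lia.
  - apply/eqP => E; subst i3; rewrite -E1 in E3; have := Ginj E3 (ltac:(lia)) (ltac:(lia)); lia.
have [psi Hpsi] := fin_all_exists Hoff.
have psi_inj : injective psi.
  move=> x y E; apply: val_inj => /=; have /andP [_ /eqP Hx] := Hpsi x.
  have /andP [_ /eqP Hy] := Hpsi y; rewrite E Hy in Hx; lia.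
pose Q := [set psi t | t in 'I_a].
have HPQ : P :&: Q = set0.
  apply/setP => v; rewrite !inE; apply/negP => /andP [HvP /imsetP [t _ Ev]].
  by have := Hpsi t; rewrite -Ev HvP.
have := max_card (P :|: Q); rewrite cardsU HPQ cards0 subn0.
rewrite /P /Q !card_imset // !card_ord; lia.
Qed.

End Big.


Theorem theorem7 : forall n : nat, 8 <= n ->
  exists (T1 : finType) (e1 : rel T1) (T2 : finType) (e2 : rel T2),
    [/\ is_tree e1, #|T1| <= n, is_tree e2, #|T2| <= n &
      forall (U : finType) (eU : rel U),
        k_universal_minimum ((n - 8) %/ 3) e1 e2 eU -> ~ is_tree eU].
Proof.
move=> n Hn.
have Ha : 0 < ((n - 8) %/ 3).+1 by [].
exists 'I_(3 * ((n - 8) %/ 3).+1).+1, (@e1 ((n - 8) %/ 3).+1),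
       'I_(3 * ((n - 8) %/ 3).+1).+1, (@e2 ((n - 8) %/ 3).+1).
have Hc : #|'I_(3 * ((n - 8) %/ 3).+1).+1| <= n by rewrite card_ord; lia.
split => //; [exact: e1_tree Ha | exact: e2_tree Ha |].
move=> U eU; rewrite /k_universal_minimum /k_universal /k_isometric_embeds.
move=> -[[HgU [[f [finj fe _]] [g [ginj ge _]]]] Hmin] HU.
have HW : k_universal ((n - 8) %/ 3) (@e1 ((n - 8) %/ 3).+1) (@e2 ((n - 8) %/ 3).+1)
            (eW ((n - 8) %/ 3).+1).
  split; first exact: eW_graph.
  split; [exact: e1_isom Ha | exact: e2_isom Ha].
have := Hmin _ _ HW; rewrite card_ord.
have := big Ha HU finj ginj fe ge.
lia.
Qed.
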